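(* Let $a,a^\dagger$ be the annihilation and creation operators of the harmonic oscillator Fock space, with $[a,a^\dagger]=1$, vacuum $|0\rangle$ satisfying $a|0\rangle=0$, $\langle 0|a^\dagger=0$, $\langle0|0\rangle=1$. For a complex number $s$ with $\mathrm{Re}(s)>1$, $$\zeta(s)=\langle 0|\,\frac{a}{1-a}\,(a^\dagger a)^{-s}\,(e^{a^\dagger}-1)\,|0\rangle,$$ where $\zeta(s)=\sum_{n\ge1}n^{-s}$ is the Riemann zeta function, $\frac{a}{1-a}:=\sum_{\ell\ge1}a^\ell$ and $e^{a^\dagger}-1:=\sum_{m\ge1}\frac{1}{m!}(a^\dagger)^m$ are formal series, and the expression is evaluated termwise.
   Context: The number states $|n\rangle:=(a^\dagger)^n|0\rangle/\sqrt{n!}$, $\langle n|:=\langle0|a^n/\sqrt{n!}$ satisfy $\langle m|n\rangle=\delta_{mn}$, and $a^\dagger a|n\rangle=n|n\rangle$. The operator $(a^\dagger a)^{-s}$ is defined on states $|n\rangle$ with $n\ge1$ by $(a^\dagger a)^{-s}|n\rangle=n^{-s}|n\rangle$. *)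

(* Defs.v *)
From Stdlib Require Import Reals Lra Factorial.
From Coquelicot Require Import Coquelicot.
Open Scope R_scope.

(* n^{-s} := exp(-s ln n) for a natural number n >= 1 and complex s. *)
Definition cpow_neg (n : nat) (s : C) : C :=
  (Rpower (INR n) (- Re s) * cos (- Im s * ln (INR n)),
   Rpower (INR n) (- Re s) * sin (- Im s * ln (INR n))).

Definition zeta_term (s : C) (n : nat) : C := cpow_neg (S n) s.
Definition zeta_value (s Z : C) : Prop := is_series (zeta_term s) Z.

(* Fock space in the number basis: a state is its sequence of coefficients
   psi n = <n|psi>. *)
Definition state := nat -> C.

Definition vac : state := fun n => match n with O => RtoC 1 | S _ => RtoC 0 end.

(* annihilation a|n> = sqrt n |n-1>, i.e. (a psi)_n = sqrt(n+1) psi_(n+1) *)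
Definition ann (psi : state) : state :=
  fun n => Cmult (RtoC (sqrt (INR (S n)))) (psi (S n)).

(* creation a^dag|n> = sqrt(n+1) |n+1>, i.e. (a^dag psi)_n = sqrt n psi_(n-1) *)
Definition cre (psi : state) : state :=
  fun n => match n with
           | O => RtoC 0
           | S k => Cmult (RtoC (sqrt (INR n))) (psi k)
           end.

(* (a^dag a)^{-s}: multiplies the |n> component by n^{-s}, for n >= 1.
   It is undefined on |0> in the paper; we set the |0> component to 0
   (it is never used: (a^dag)^m |0> with m >= 1 has no |0> component). *)
Definition numinvpow (s : C) (psi : state) : state :=
  fun n => match n with
           | O => RtoC 0
           | S _ => Cmult (cpow_neg n s) (psi n)
           end.

Definition bra0 (psi : state) : C := psi O.

(* the (l,m) term of  <0| (sum_{l>=1} a^l) (a^dag a)^{-s} (sum_{m>=1} (a^dag)^m / m!) |0>,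
   indexed by l, m >= 1 *)
Definition fock_term (s : C) (l m : nat) : C :=
  Cmult (RtoC (/ INR (fact m)))
        (bra0 (Nat.iter l ann (numinvpow s (Nat.iter m cre vac)))).

(* Main.v *)
Require Import Defs.
From Stdlib Require Import Reals Lra Lia Factorial Arith.
From Coquelicot Require Import Coquelicot.
Open Scope R_scope.
Lemma key (sg x : R) : 1 < sg -> 1 <= x ->
  Rpower (x+1) (-sg) * (sg-1) <= Rpower x (1-sg) - Rpower (x+1) (1-sg).
Proof.
  intros Hs Hx.
  destruct (MVT_gen (fun t => Rpower t (1-sg)) x (x+1) (fun t => (1-sg) * Rpower t (-sg)))
    as [c [Hc Heq]].
  - intros t Ht. rewrite Rmin_left in Ht by lra. rewrite Rmax_right in Ht by lra.
    apply is_derive_Reals.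
    replace (-sg) with (1 - sg - 1) by ring.
    apply derivable_pt_lim_power. lra.
  - intros t Ht. rewrite Rmin_left in Ht by lra. rewrite Rmax_right in Ht by lra.
    apply derivable_continuous_pt. exists ((1-sg) * Rpower t (1-sg-1)).
    apply derivable_pt_lim_power. lra.
  - rewrite Rmin_left in Hc by lra. rewrite Rmax_right in Hc by lra.
    assert (Rpower (x+1) (-sg) <= Rpower c (-sg)).
    { unfold Rpower.
      assert (ln c <= ln (x+1)) by (apply ln_le; lra).
      destruct (Rle_lt_or_eq_dec (-sg * ln (x+1)) (-sg * ln c)) as [h|h]; [nra| |].
      - left; apply exp_increasing; exact h.
      - rewrite h; lra. }
    simpl in Heq. nra.
Qed.

Lemma Rpower1 y : Rpower 1 y = 1.
Proof. unfold Rpower. rewrite ln_1, Rmult_0_r. apply exp_0. Qed.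

Lemma psum_bound (sg : R) : 1 < sg -> forall N,
  sum_n (fun n => Rpower (INR (S n)) (-sg)) N <= 1 + (1 - Rpower (INR (S N)) (1-sg))/(sg-1).
Proof.
  intros Hs. induction N.
  - rewrite sum_O. simpl. rewrite !Rpower1. unfold Rdiv. lra.
  - rewrite sum_Sn. change plus with Rplus.
    assert (H := key sg (INR (S N)) Hs).
    assert (1 <= INR (S N)) by (rewrite S_INR; pose proof (pos_INR N); lra).
    specialize (H H0). rewrite <- S_INR in H.
    assert (Rpower (INR (S (S N))) (- sg) <=
       (Rpower (INR (S N)) (1 - sg) - Rpower (INR (S (S N))) (1 - sg)) / (sg - 1)).
    { apply (Rmult_le_reg_r (sg-1)); [lra|]. unfold Rdiv.
      rewrite Rmult_assoc, Rinv_l, Rmult_1_r by lra. exact H. }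
    replace ((1 - Rpower (INR (S (S N))) (1 - sg)) / (sg - 1)) with
      ((1 - Rpower (INR (S N)) (1 - sg)) / (sg - 1) +
       (Rpower (INR (S N)) (1 - sg) - Rpower (INR (S (S N))) (1 - sg)) / (sg - 1))
      by (field; lra).
    lra.
Qed.

Lemma pseries_ex (sg : R) : 1 < sg -> ex_series (fun n => Rpower (INR (S n)) (-sg)).
Proof.
  intros Hs.
  destruct (growing_cv (sum_n (fun n => Rpower (INR (S n)) (-sg)))) as [l Hl].
  - intros n. rewrite sum_Sn. change plus with Rplus.
    pose proof (exp_pos (-sg * ln (INR (S (S n))))). unfold Rpower. lra.
  - exists (1 + 1/(sg-1)). intros x [n ->].
    eapply Rle_trans; [apply psum_bound; exact Hs|].
    assert (0 < Rpower (INR (S n)) (1 - sg)) by apply exp_pos.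
    assert (0 < / (sg -1)) by (apply Rinv_0_lt_compat; lra).
    unfold Rdiv. nra.
  - exists l. apply is_lim_seq_Reals in Hl. exact Hl.
Qed.

Lemma cre_iter (m n : nat) :
  Nat.iter m cre vac n = if Nat.eqb n m then RtoC (sqrt (INR (fact m))) else RtoC 0.
Proof.
  revert n; induction m; intros n.
  - destruct n; simpl; [rewrite sqrt_1|]; reflexivity.
  - destruct n; [reflexivity|].
    change (Nat.iter (S m) cre vac (S n)) with
      (Cmult (RtoC (sqrt (INR (S n)))) (Nat.iter m cre vac n)).
    rewrite IHm. simpl Nat.eqb. destruct (Nat.eqb_spec n m).
    + subst. rewrite <- RtoC_mult, <- sqrt_mult by (apply pos_INR).
      rewrite <- mult_INR. reflexivity.
    + rewrite Cmult_0_r. reflexivity.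
Qed.

Lemma ann_iter (l n : nat) (phi : state) :
  Cmult (Nat.iter l ann phi n) (RtoC (sqrt (INR (fact n)))) =
  Cmult (RtoC (sqrt (INR (fact (n + l))))) (phi (n + l)%nat).
Proof.
  revert n; induction l; intros n.
  - rewrite Nat.add_0_r. simpl. apply Cmult_comm.
  - change (Nat.iter (S l) ann phi n) with
      (Cmult (RtoC (sqrt (INR (S n)))) (Nat.iter l ann phi (S n))).
    replace (n + S l)%nat with (S n + l)%nat by lia.
    rewrite <- IHl.
    rewrite (Cmult_comm (RtoC (sqrt (INR (S n))))), <- Cmult_assoc. f_equal.
    rewrite <- RtoC_mult, <- sqrt_mult by (apply pos_INR).
    rewrite <- mult_INR. reflexivity.
Qed.

Lemma fock_eval s l m :
  fock_term s (S l) (S m) = if Nat.eqb l m then zeta_term s l else RtoC 0.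
Proof.
  unfold fock_term, bra0.
  assert (H := ann_iter (S l) 0 (numinvpow s (Nat.iter (S m) cre vac))).
  simpl fact in H. rewrite Nat.add_0_l in H.
  replace (sqrt (INR 1)) with 1 in H by (simpl; rewrite sqrt_1; auto).
  rewrite Cmult_1_r in H. rewrite H.
  unfold numinvpow. rewrite cre_iter. simpl Nat.eqb.
  destruct (Nat.eqb_spec l m).
  - subst. unfold zeta_term.
    change (fact m + m * fact m)%nat with (fact (S m)).
    rewrite (Cmult_comm (cpow_neg _ _) (RtoC (sqrt _))), !Cmult_assoc, <- !RtoC_mult.
    replace (/ INR (fact (S m)) * sqrt (INR (fact (S m))) * sqrt (INR (fact (S m)))) with 1.
    + apply Cmult_1_l.
    + assert (0 < INR (fact (S m))) by (apply lt_0_INR, lt_O_fact).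
      rewrite Rmult_assoc, sqrt_sqrt by lra. field. lra.
  - rewrite !Cmult_0_r. reflexivity.
Qed.

Lemma single_series (l : nat) (c : C) :
  is_series (fun m => if Nat.eqb l m then c else RtoC 0) c.
Proof.
  unfold is_series.
  apply filterlim_ext_loc with (fun _ => c).
  - exists l. intros N HN. induction N.
    + assert (l = 0)%nat by lia. subst. rewrite sum_O. reflexivity.
    + destruct (Nat.eq_dec l (S N)).
      * subst. rewrite sum_Sn, Nat.eqb_refl.
        assert (forall k, (k <= N)%nat -> sum_n (fun m => if Nat.eqb (S N) m then c else RtoC 0) k = zero).
        { intros k Hk. induction k.
          - rewrite sum_O. reflexivity.
          - rewrite sum_Sn, IHk by lia.
            destruct (Nat.eqb_spec (S N) (S k)); [lia|]. apply plus_zero_l. }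
        rewrite H by lia. symmetry. apply plus_zero_l.
      * rewrite sum_Sn, <- IHN by lia.
        destruct (Nat.eqb_spec l (S N)); [lia|]. symmetry. exact (plus_zero_r c).
  - apply filterlim_const.
Qed.


Theorem mainTheorem2 (s : C) (hs : 1 < Re s) :
  exists Z : C, zeta_value s Z /\
  exists inner : nat -> C,
    (forall l : nat, is_series (fun m : nat => fock_term s (S l) (S m)) (inner l)) /\
    is_series inner Z.
Proof.
  assert (Hex : ex_series (zeta_term s)).
  { apply (@ex_series_le C_AbsRing C_CompleteNormedModule) with (b := fun n => Rpower (INR (S n)) (- Re s)).
    2: apply pseries_ex; exact hs.
    intros n. change (Cmod (zeta_term s n) <= Rpower (INR (S n)) (- Re s)). unfold zeta_term, cpow_neg, Cmod.
    set (r := Rpower (INR (S n)) (- Re s)). set (t := - Im s * ln (INR (S n))). cbv beta iota delta [fst snd].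
    replace ((r * cos t) ^ 2 + (r * sin t) ^ 2) with (r ^ 2 * (Rsqr (sin t) + Rsqr (cos t)))
      by (unfold Rsqr; ring).
    rewrite sin2_cos2, Rmult_1_r.
    assert (0 <= r) by (left; apply exp_pos).
    rewrite sqrt_pow2 by exact H. lra. }
  destruct Hex as [Z HZ].
  exists Z. split; [exact HZ|].
  exists (zeta_term s). split; [|exact HZ].
  intros l. eapply is_series_ext.
  - intros m. symmetry. apply fock_eval.
  - apply single_series.
Qed.
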